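(* Let $G$ be a $3$-edge-colorable cubic graph of order $2n\geq 8$. Then $\chi'_{[n-1]}(G)=4$.
   Context: All graphs are finite, simple (no loops, no parallel edges), connected and cubic. For a positive integer $k$, a $[k]$-matching of $G$ is a matching of $G$ with exactly $k$ edges. The excessive $[k]$-index $\chi'_{[k]}(G)$ is the minimum number of $[k]$-matchings of $G$ whose union is $E(G)$; if some edge of $G$ lies in no $[k]$-matching, one sets $\chi'_{[k]}(G)=\infty$. *)

(* Defs.v *)
(* A finite simple graph is a symmetric irreflexive relation
   [g : rel T] on a finite type [T]; an edge is the 2-element vertex set {x,y}. *)
From HB Require Import structures.
From mathcomp Require Import all_boot.
Set Implicit Arguments. Unset Strict Implicit. Unset Printing Implicit Defensive.

Section Graphs.
Variable T : finType.
Implicit Types (g : rel T).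

Definition simple_graph g := symmetric g /\ irreflexive g.

Definition edges g : {set {set T}} :=
  [set [set x; y] | x in T, y in T & g x y].

Definition connected_graph g := forall x y : T, connect g x y.

Definition cubic g := forall x : T, #|[set y | g x y]| = 3.

Definition matching g (M : {set {set T}}) := M \subset edges g /\ trivIset M.

Definition kmatching g k (M : {set {set T}}) := matching g M /\ #|M| = k.

Definition kcover g k m :=
  exists s : seq {set {set T}},
    size s = m /\ (forall M, M \in s -> kmatching g k M) /\
    \bigcup_(M <- s) M = edges g.

(* chi'_[k](G) = m  (m finite): m is the minimum number of [k]-matchings
   whose union is E(G).  If no such cover exists, chi'_[k](G) = infinity,
   and this predicate is false for every m. *)
Definition excessive_index_eq g k m :=
  kcover g k m /\ forall m', m' < m -> ~ kcover g k m'.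

Definition three_edge_colorable g :=
  exists c : {set T} -> 'I_3,
    forall e1 e2, e1 \in edges g -> e2 \in edges g -> e1 != e2 ->
      ~~ [disjoint e1 & e2] -> c e1 != c e2.
End Graphs.

(* Main.v *)
Require Import Defs.
From mathcomp Require Import all_boot.
From mathcomp Require Import zify.
Set Implicit Arguments. Unset Strict Implicit. Unset Printing Implicit Defensive.

Lemma disj_intro (T : finType) (A B : {set T}) :
  (forall z, z \in A -> z \in B -> False) -> [disjoint A & B].
Proof.
move=> h; apply/pred0P => z /=; apply/negbTE/negP => /andP[]; exact: h.
Qed.

Lemma disj_elim (T : finType) (A B : {set T}) z :
  [disjoint A & B] -> z \in A -> z \in B -> False.
Proof. move=> /pred0P /(_ z) /= h zA zB; by rewrite zA zB in h. Qed.

Lemma trivI_intro (T : finType) (P : {set {set T}}) :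
  (forall A B z, A \in P -> B \in P -> z \in A -> z \in B -> A = B) -> trivIset P.
Proof.
move=> h; apply/trivIsetP => A B hA hB ne; apply: disj_intro => z zA zB.
by move: ne; rewrite (h _ _ _ hA hB zA zB) eqxx.
Qed.

Lemma edgeI (T : finType) (g : rel T) x y : g x y -> [set x; y] \in edges g.
Proof. by move=> h; apply/imset2P; exists x y; rewrite ?inE. Qed.

Lemma edgeE (T : finType) (g : rel T) e : e \in edges g ->
  exists x y, g x y /\ e = [set x; y].
Proof. by case/imset2P => x y _; rewrite inE => h ->; exists x, y. Qed.

Definition okc (T : finType) (g : rel T) (c : {set T} -> 'I_3) :=
  forall e1 e2, e1 \in edges g -> e2 \in edges g -> e1 != e2 ->
      ~~ [disjoint e1 & e2] -> c e1 != c e2.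

Lemma col_inj (T : finType) (g : rel T) c x y y' : simple_graph g -> okc g c ->
  g x y -> g x y' -> c [set x; y] = c [set x; y'] -> y = y'.
Proof.
move=> [sg ig] ok hy hy' e; apply/eqP/negPn/negP => ne.
suff: c [set x; y] != c [set x; y'] by rewrite e eqxx.
apply: ok (edgeI hy) (edgeI hy') _ _.
- apply/eqP => E; have : y \in [set x; y'] by rewrite -E set22.
  rewrite !inE => /orP[/eqP yx|yy]; last by rewrite yy in ne.
  by move: hy; rewrite yx ig.
- by apply/negP => D; apply: (disj_elim D (set21 x y) (set21 x y')).
Qed.

Lemma exists_col (T : finType) (g : rel T) c (x : T) i :
  simple_graph g -> cubic g -> okc g c ->
  exists y, g x y && (c [set x; y] == i).
Proof.
move=> sg cub ok.
have inj : {in [set y | g x y] &, injective (fun y => c [set x; y])}.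
  by move=> y y'; rewrite !inE => hy hy'; exact: col_inj sg ok hy hy'.
have : [set c [set x; y] | y in [set y | g x y]] == setT.
  by rewrite eqEcard subsetT card_in_imset // cub cardsT card_ord.
move/eqP => E; have : i \in [set c [set x; y] | y in [set y | g x y]].
  by rewrite E inE.
by case/imsetP => y; rewrite inE => hy ->; exists y; rewrite hy eqxx.
Qed.

Definition good (T : finType) (g : rel T) c := [/\ simple_graph g, cubic g & okc g c].

Definition pn (T : finType) (g : rel T) c (i : 'I_3) (x : T) :=
  odflt x [pick y | g x y && (c [set x; y] == i)].

Lemma pnP (T : finType) (g : rel T) c i x : good g c ->
  g x (pn g c i x) /\ c [set x; pn g c i x] = i.
Proof.
case=> sg cub ok; rewrite /pn; case: pickP => [y /andP[h /eqP e] // | none].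
by have [y] := exists_col x i sg cub ok; rewrite none.
Qed.

Lemma pn_uniq (T : finType) (g : rel T) c i x y : good g c ->
  g x y -> c [set x; y] = i -> y = pn g c i x.
Proof.
move=> G hy hc; have [h1 h2] := pnP i x G; case: G => sg _ ok.
by apply: (col_inj sg ok hy h1); rewrite h2.
Qed.

Lemma pn_inv (T : finType) (g : rel T) c i x : good g c ->
  pn g c i (pn g c i x) = x.
Proof.
move=> G; have [h1 h2] := pnP i x G; symmetry; apply: pn_uniq => //.
  by case: G => [[sg _] _ _]; rewrite sg.
by rewrite setUC.
Qed.

Lemma pn_neq (T : finType) (g : rel T) c i x : good g c -> pn g c i x != x.
Proof.
move=> G; have [h1 _] := pnP i x G; apply/eqP => e; move: h1; rewrite e.
by case: G => [[_ ig] _ _]; rewrite ig.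
Qed.

Lemma pn_col (T : finType) (g : rel T) c i j x : good g c ->
  pn g c i x = pn g c j x -> i = j.
Proof.
move=> G e; have [_ h1] := pnP i x G; have [_ h2] := pnP j x G.
by rewrite -h1 -h2 e.
Qed.

Definition M (T : finType) (g : rel T) c i := [set [set x; pn g c i x] | x in T].

Lemma M_edges (T : finType) (g : rel T) c i : good g c -> M g c i \subset edges g.
Proof.
move=> G; apply/subsetP => e /imsetP [x _ ->]; apply: edgeI.
by have [] := pnP i x G.
Qed.

Lemma M_col (T : finType) (g : rel T) c i e : good g c -> e \in M g c i -> c e = i.
Proof. by move=> G /imsetP [x _ ->]; have [] := pnP i x G. Qed.

Lemma M_at (T : finType) (g : rel T) c i x z : good g c ->
  z \in [set x; pn g c i x] -> [set x; pn g c i x] = [set z; pn g c i z].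
Proof.
move=> G; rewrite !inE => /orP[/eqP -> // | /eqP ->].
by rewrite pn_inv // setUC.
Qed.

Lemma M_triv (T : finType) (g : rel T) c i : good g c -> trivIset (M g c i).
Proof.
move=> G; apply: trivI_intro => A B z /imsetP [x _ ->] /imsetP [y _ ->] hx hy.
by rewrite (M_at G hx) (M_at G hy).
Qed.

Lemma M_card (T : finType) (g : rel T) c i : good g c -> #|M g c i| * 2 = #|T|.
Proof.
move=> G; have [_] := leq_card_cover (M g c i); rewrite M_triv // => /eqP.
have -> : cover (M g c i) = setT.
  apply/setP => x; rewrite inE; apply/bigcupP; exists [set x; pn g c i x].
    by apply/imsetP; exists x.
  by rewrite set21.
rewrite cardsT => ->; rewrite -sum_nat_const; apply: eq_bigr => e /imsetP [x _ ->].
by rewrite cards2 eq_sym pn_neq.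
Qed.

Lemma edge_M (T : finType) (g : rel T) c e : good g c ->
  e \in edges g -> e \in M g c (c e).
Proof.
move=> G /edgeE [x [y [h ->]]].
have [i ei] : exists i, c [set x; y] = i by exists (c [set x; y]).
rewrite ei (pn_uniq G h ei); by apply/imsetP; exists x.
Qed.

Lemma M_disj (T : finType) (g : rel T) c i j : good g c -> i != j ->
  M g c i :&: M g c j = set0.
Proof.
move=> G ne; apply/setP => e; rewrite !inE; apply/negbTE/negP => /andP[h1 h2].
by move: ne; rewrite -(M_col G h1) -(M_col G h2) eqxx.
Qed.

Definition i0 : 'I_3 := @Ordinal 3 0 isT.
Definition i1 : 'I_3 := @Ordinal 3 1 isT.
Definition i2 : 'I_3 := @Ordinal 3 2 isT.

Lemma ord3 (i : 'I_3) : [\/ i = i0, i = i1 | i = i2].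
Proof.
case: i => [[|[|[|k]]] hk].
- by constructor 1; apply/val_inj.
- by constructor 2; apply/val_inj.
- by constructor 3; apply/val_inj.
- done.
Qed.

Lemma connect_in (T : finType) (g : rel T) (A : pred T) :
  (forall y y', A y -> g y y' -> A y') -> forall x y, A x -> connect g x y -> A y.
Proof.
move=> cl x y xA /connectP [p pth ->]; elim: p x xA pth => [|z p IH] x xA //=.
by case/andP => gxz pth; apply: IH (cl _ _ xA gxz) pth.
Qed.

Lemma exists_u (T : finType) (g : rel T) c : good g c -> connected_graph g ->
  8 <= #|T| -> exists u, pn g c i1 u != pn g c i2 (pn g c i0 u).
Proof.
move=> G con cT.
case: (boolP [exists u, pn g c i1 u != pn g c i2 (pn g c i0 u)]) => [/existsP //|].
rewrite negb_exists => /forallP H; exfalso.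
have {}H x : pn g c i1 x = pn g c i2 (pn g c i0 x) by apply/eqP; have := H x; rewrite negbK.
set p0 := pn g c i0 in H *; set p1 := pn g c i1 in H *; set p2 := pn g c i2 in H *.
have inv0 x : p0 (p0 x) = x by apply: pn_inv.
have inv1 x : p1 (p1 x) = x by apply: pn_inv.
have inv2 x : p2 (p2 x) = x by apply: pn_inv.
have a x : p2 x = p1 (p0 x) by rewrite H inv0.
have b1 x : p2 (p1 x) = p0 x by rewrite H inv2.
have b x : p0 (p1 x) = p2 x.
  by rewrite (a x); apply: (can_inj inv1); rewrite (inv1 (p0 x)) -(b1 x) (a (p1 x)).
have d x : p0 (p2 x) = p1 x by rewrite -b inv0.
have e x : p1 (p2 x) = p0 x by rewrite a inv1.
have [u _] : exists u : T, true.
  by case: (pickP (fun _ : T => true)) => [u _|/eq_card0 h]; [exists u | move: cT; rewrite h].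
have a' x : p1 (p0 x) = p2 x by rewrite a.
have H' x : p2 (p0 x) = p1 x by rewrite H.
pose A := [:: u; p0 u; p1 u; p2 u].
have cl : forall y y', y \in A -> g y y' -> y' \in A.
  move=> y y' yA hy; rewrite (pn_uniq G hy (erefl _)).
  have : forall i, pn g c i y \in A.
    move=> i; case: (ord3 i) => ->; rewrite -/p0 -/p1 -/p2;
    move: yA; rewrite /A !inE => /or4P [] /eqP ->;
    by rewrite /A ?inv0 ?inv1 ?inv2 ?a' ?H' ?b ?b1 ?d ?e eqxx ?orbT.
  by move=> /(_ (c [set y; y'])).
have sub : T \subset A.
  by apply/subsetP => y _; apply: (connect_in cl (x := u)); rewrite ?inE ?eqxx.
by have := leq_trans cT (leq_trans (subset_leq_card sub) (card_size A)).
Qed.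

Lemma sub_size (T : finType) (B : {set T}) k : #|B| <= k ->
  forall m (A : {set T}), #|A| = k + m -> B \subset A ->
  exists C : {set T}, [/\ B \subset C, C \subset A & #|C| = k].
Proof.
move=> hB; elim=> [|m IH] A hA sBA; first by exists A; rewrite addn0 in hA.
have : 0 < #|A :\: B| by rewrite cardsD (setIidPr sBA) hA; lia.
case/card_gt0P => a; rewrite inE => /andP[aB aA].
have e1 : #|A :\ a| = k + m by move: hA; rewrite (cardsD1 a) aA; lia.
have e2 : B \subset A :\ a.
  apply/subsetP => x xB; rewrite !inE (subsetP sBA _ xB) andbT.
  by apply: contraNneq aB => <-.
have [C [h1 h2 h3]] := IH _ e1 e2.
exists C; split => //; apply: subset_trans h2 _; exact: subsetDl.
Qed.

Lemma card_cup (T : finType) (s : seq {set {set T}}) k :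
  (forall M, M \in s -> #|M| = k) -> #|\bigcup_(M <- s) M| <= size s * k.
Proof.
elim: s => [|M s IH] h; first by rewrite big_nil cards0.
rewrite big_cons /= mulSn; apply: leq_trans (leq_card_setU _ _) _.
by rewrite h ?mem_head // leq_add2l IH // => M' hM'; apply: h; rewrite inE hM' orbT.
Qed.

Lemma cover4 (T : finType) (g : rel T) c n u : good g c -> #|T| = 2 * n -> 4 <= n ->
  pn g c i1 u != pn g c i2 (pn g c i0 u) -> kcover g n.-1 4.
Proof.
move=> G cT n4 hu.
have cM i : #|M g c i| = n by have := M_card i G; rewrite cT; lia.
set p0 := pn g c i0 in hu *; set p1 := pn g c i1 in hu *; set p2 := pn g c i2 in hu *.
set M0 := M g c i0; set M1 := M g c i1; set M2 := M g c i2.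
set v := p0 u.
set e2 := [set u; p1 u]; set e3 := [set v; p2 v].
have e2M : e2 \in M1 by apply/imsetP; exists u.
have e3M : e3 \in M2 by apply/imsetP; exists v.
have ce2 : c e2 = i1 by apply: M_col e2M.
have ce3 : c e3 = i2 by apply: M_col e3M.
have dis23 z : z \in e2 -> z \in e3 -> False.
  rewrite !inE => /orP[] /eqP -> /orP[] /eqP.
  - by move/eqP; rewrite eq_sym (negbTE (pn_neq _ _ G)).
  - move=> e; have : p2 u = p0 u by rewrite {1}e /p2 pn_inv.
    by move/(pn_col G).
  - by move/(pn_col G).
  - by move/eqP; rewrite (negbTE hu).
pose S := [set e in [:: [set u; v]; [set p1 u; p0 (p1 u)]; [set p2 v; p0 (p2 v)]]].
pose N0 := (M0 :\: S) :|: [set e2; e3].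
pose f z := if z \in e2 then e2 else if z \in e3 then e3 else [set z; p0 z].
have N0_at A z : A \in N0 -> z \in A -> A = f z.
  rewrite /N0 /f in_setU in_setD => /orP[/andP[AS AM] zA | ].
    case/imsetP: AM => x _ Ax; rewrite Ax in zA AS *.
    rewrite (M_at G zA) in AS *.
    case: ifP => [ze2|_].
      move: ze2; rewrite /e2 !inE => /orP[] /eqP ez; move: AS; rewrite ez /S !inE ?eqxx ?orbT //.
    case: ifP => [ze3|_] //.
    move: ze3; rewrite /e3 !inE => /orP[] /eqP ez; move: AS; rewrite ez /S !inE ?eqxx ?orbT //.
    by rewrite /v /p0 pn_inv // setUC eqxx.
  move/set2P => [] -> zA; first by rewrite zA.
  by case: ifP => [zB|]; [case: (dis23 z zB zA) | rewrite zA].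
have N0tr : trivIset N0.
  by apply: trivI_intro => A B z hA hB zA zB; rewrite (N0_at A z hA zA) (N0_at B z hB zB).
have N0e : N0 \subset edges g.
  rewrite /N0 subUset; apply/andP; split; first exact: subset_trans (subsetDl _ _) (M_edges _ G).
  by apply/subsetP => e /set2P [] ->; apply: (subsetP (M_edges _ G)); [exact e2M | exact e3M].
have cS : #|S| <= 3 by rewrite /S cardsE; apply: card_size.
have cMS : n - 3 <= #|M0 :\: S|.
  rewrite cardsD cM; have := subset_leq_card (subsetIr M0 S); lia.
have /card_gt0P [f0 f0in] : 0 < #|M0 :\: S| by lia.
have f0M : f0 \in M0 by move: f0in; rewrite in_setD => /andP[].
have cN0 : n.-1 <= #|N0|.
  have I0 : (M0 :\: S) :&: [set e2; e3] = set0.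
    apply/setP => e; rewrite in_setI in_set0 in_setD; apply/negbTE; apply/negP.
    move=> /andP[/andP[_ eM] /set2P [] ee]; have := M_col G eM.
      by rewrite ee ce2 => /(congr1 val).
    by rewrite ee ce3 => /(congr1 val).
  have ne23 : e2 != e3.
    by apply/eqP => E; have := ce3; rewrite -E ce2 => /(congr1 val).
  rewrite /N0 cardsU I0 cards0 cards2 ne23 subn0 addn2.
  move: cMS n4; generalize #|M0 :\: S| => k; clear; lia.
pose B := [set e in [:: e2; e3; f0]].
have BN0 : B \subset N0.
  apply/subsetP => e; rewrite /B inE !in_cons in_nil => /or4P [] // /eqP ->;
  rewrite /N0 in_setU ?f0in //; apply/orP; right; apply/set2P; by [left|right].
have cB : #|B| <= n.-1.
  rewrite /B cardsE; apply: leq_trans (card_size _) _; rewrite /= -subn1; move: n4; clear; lia.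
have eN0 : #|N0| = n.-1 + (#|N0| - n.-1) by rewrite subnKC.
have [N [BN NN0 cN]] := sub_size cB eN0 BN0.
have inB e : e \in [:: e2; e3; f0] -> e \in N.
  by move=> h; apply: (subsetP BN); rewrite /B inE.
have e2N : e2 \in N by apply: inB; rewrite !in_cons eqxx.
have e3N : e3 \in N by apply: inB; rewrite !in_cons eqxx ?orbT.
have f0N : f0 \in N by apply: inB; rewrite !in_cons eqxx ?orbT.
have kD i e : e \in M g c i -> kmatching g n.-1 (M g c i :\ e).
  move=> eM; split; [split|].
  - exact: subset_trans (subsetDl _ _) (M_edges _ G).
  - exact: trivIsetS (subsetDl _ _) (M_triv _ G).
  - by have := cardsD1 e (M g c i); rewrite eM cM add1n => ->.
exists [:: M0 :\ f0; M1 :\ e2; M2 :\ e3; N]; split => //; split.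
  move=> X; rewrite !in_cons in_nil orbF => /or4P [] /eqP ->.
  - exact: kD.
  - exact: kD.
  - exact: kD.
  - by split; [split|]; [exact: subset_trans NN0 N0e | exact: trivIsetS NN0 N0tr | ].
apply/eqP; rewrite eqEsubset; apply/andP; split.
  rewrite !big_cons big_nil !subUset sub0set andbT.
  apply/and4P; split.
  - exact: subset_trans (subsetDl _ _) (M_edges _ G).
  - exact: subset_trans (subsetDl _ _) (M_edges _ G).
  - exact: subset_trans (subsetDl _ _) (M_edges _ G).
  - exact: subset_trans NN0 N0e.
apply/subsetP => e he; have hm := edge_M G he.
rewrite !big_cons big_nil !in_setU !in_setD1 in_set0 orbF.
case: (ord3 (c e)) => ce; rewrite ce in hm.
- by case: (e =P f0) => [->|_]; rewrite ?f0N ?orbT // hm.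
- by case: (e =P e2) => [->|_]; rewrite ?e2N ?orbT // hm ?orbT.
- by case: (e =P e3) => [->|_]; rewrite ?e3N ?orbT // hm ?orbT.
Qed.

Theorem proposition3 (T : finType) (g : rel T) (n : nat) :
  simple_graph g -> connected_graph g -> cubic g ->
  three_edge_colorable g ->
  #|T| = 2 * n -> 8 <= 2 * n ->
  excessive_index_eq g n.-1 4.
Proof.
move=> sg con cub [c ok] cT n8.
have G : good g c by split.
have n4 : 4 <= n by lia.
split.
  have n8T : 8 <= #|T| by rewrite cT.
  have [u hu] := exists_u G con n8T.
  exact: cover4 G cT n4 hu.
move=> m lt [s [sz [hs U]]].
have cM i : #|M g c i| = n by have := M_card i G; rewrite cT; lia.
have cE : 3 * n <= #|edges g|.
  have sub : M g c i0 :|: M g c i1 :|: M g c i2 \subset edges g.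
    by rewrite !subUset !M_edges.
  apply: leq_trans (subset_leq_card sub).
  rewrite cardsU setIUl !M_disj // setU0 cards0 subn0 cardsU M_disj // cards0 subn0 !cM.
  by rewrite mulSn mulSn mul1n addnA.
have := @card_cup _ s n.-1 (fun M h => (hs M h).2); rewrite U sz.
have : m * n.-1 <= 3 * n.-1 by rewrite leq_mul2r; apply/orP; right; rewrite -ltnS.
move=> h1 h2; have := leq_trans cE (leq_trans h2 h1); move: n4; clear; lia.
Qed.
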